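(* Under Assumptions A1–A3 (with constant $p$), the operator $T$ has a fixed point in $\mathcal H_p$ if and only if there exist $g_0,h\in\mathcal H_p$ such that $T^ng_0\to h$ in $L_p(\pi)$ as $n\to\infty$.
   Context: Standing setting: $\{X_t\}_{t\ge0}$ is a stationary Markov process on a separable completely metrizable space $\mathsf X$ with transition kernel $\Pi$ and stationary law $\pi$; $\{\eta_t\}$ iid with law $\nu$ on $\mathsf W$, independent of $\{X_t\}$; $\phi,g\ge0$ Borel on $\mathsf X\times\mathsf X\times\mathsf W$ with $\Phi_{t+1}=\phi(X_t,X_{t+1},\eta_{t+1})$, $G_{t+1}=g(X_t,X_{t+1},\eta_{t+1})$. $\mathcal H_p$ is the set of nonnegative functions in $L_p(\pi)$. Valuation operator $Vh(x)=\int h(y)[\int\phi(x,y,\eta)\nu(d\eta)]\Pi(x,dy)$; $\hat g(x)=\int\int\phi g\,d\nu\,\Pi(x,dy)$; $Th=Vh+\hat g$. A1: $\phi>0$ everywhere and $G_t>0$ with positive probability. A2: for all Borel $B$ with $\pi(B)>0$ and all $x$, $\Pi^n(x,B)>0$ for some $n$. A3: for some $p\ge1$, $\hat g\in\mathcal H_p$ and $V$ maps $L_p(\pi)$ into itself with some power $V^i$ compact. *)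

(* Defs.v *)
From HB Require Import structures.
From mathcomp Require Import all_boot all_order all_algebra.
From mathcomp Require Import all_classical all_reals all_analysis.
From mathcomp Require Import measurable_realfun.
Set Implicit Arguments. Unset Strict Implicit. Unset Printing Implicit Defensive.
Import Order.TTheory GRing.Theory Num.Theory.
Local Open Scope classical_set_scope.
Local Open Scope ring_scope.
Local Open Scope ereal_scope.

Notation Borel X := (g_sigma_algebraType (@open X)).

(* Polish: X (given with a complete metric) is Hausdorff (so the pseudometric
   is a metric) and separable (has a countable dense subset). *)
Definition separable_space (T : topologicalType) : Prop :=
  exists S : set T, countable S /\ dense S.

Fixpoint kpow {R : realType} {d} {X : measurableType d}
    (Pi : R.-pker X ~> X) (n : nat) (x : X) (B : set X) : \bar R :=
  match n with
  | 0%N => (\1_B x)%:E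
  | n'.+1 => \int[Pi x]_y kpow Pi n' y B
  end.

Definition phibar {R : realType} {d dW} {X : measurableType d}
    {W : measurableType dW} (nu : probability W R) (phi : X * X * W -> R)
    (x y : X) : \bar R :=
  \int[nu]_w (phi (x, y, w))%:E.

Definition Vop {R : realType} {d dW} {X : measurableType d}
    {W : measurableType dW} (Pi : R.-pker X ~> X) (nu : probability W R)
    (phi : X * X * W -> R) (h : X -> \bar R) (x : X) : \bar R :=
  \int[Pi x]_y (h y * phibar nu phi x y).

Definition ghat {R : realType} {d dW} {X : measurableType d}
    {W : measurableType dW} (Pi : R.-pker X ~> X) (nu : probability W R)
    (phi g : X * X * W -> R) (x : X) : \bar R :=
  \int[Pi x]_y \int[nu]_w (phi (x, y, w) * g (x, y, w))%:E.

Definition Top {R : realType} {d dW} {X : measurableType d}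
    {W : measurableType dW} (Pi : R.-pker X ~> X) (nu : probability W R)
    (phi g : X * X * W -> R) (h : X -> \bar R) (x : X) : \bar R :=
  Vop Pi nu phi h x + ghat Pi nu phi g x.

(* membership in L_p(pi) (functions are extended-real valued, measurable,
   with finite p-norm; hence finite pi-a.e.) *)
Definition inLp {R : realType} {d} {X : measurableType d}
    (pi : {measure set X -> \bar R}) (p : R) (f : X -> \bar R) : Prop :=
  measurable_fun setT f /\ 'N[pi]_(p%:E)[f] < +oo.

Definition inHp {R : realType} {d} {X : measurableType d}
    (pi : {measure set X -> \bar R}) (p : R) (f : X -> \bar R) : Prop :=
  inLp pi p f /\ forall x, 0 <= f x.

Definition maps_Lp_into_itself {R : realType} {d} {X : measurableType d}
    (pi : {measure set X -> \bar R}) (p : R) (Pi : R.-pker X ~> X)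
    (K : X -> X -> \bar R) : Prop :=
  forall h : X -> \bar R, inLp pi p h ->
    {ae pi, forall x, (Pi x).-integrable setT (fun y => h y * K x y)} /\
    inLp pi p (fun x => \int[Pi x]_y (h y * K x y)).

Definition compact_op {R : realType} {d} {X : measurableType d}
    (pi : {measure set X -> \bar R}) (p : R)
    (A : (X -> \bar R) -> (X -> \bar R)) : Prop :=
  forall f : nat -> X -> \bar R,
    (forall n, inLp pi p (f n)) ->
    (exists M : R, forall n, 'N[pi]_(p%:E)[f n] <= M%:E) ->
    exists (s : nat -> nat) (l : X -> \bar R),
      (forall n, (s n < s n.+1)%N) /\ inLp pi p l /\
      ('N[pi]_(p%:E)[(fun x => A (f (s n)) x - l x)] @[n --> \oo] --> 0).

(* Main.v *)
Require Import Defs.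
From HB Require Import structures.
From mathcomp Require Import all_boot all_order all_algebra.
From mathcomp Require Import all_classical all_reals all_analysis.
From mathcomp Require Import measurable_realfun.
Import Order.TTheory GRing.Theory Num.Theory.
Local Open Scope classical_set_scope.
Local Open Scope ring_scope.
Local Open Scope ereal_scope.
Set Implicit Arguments.
Require Import Defs.
From HB Require Import structures.
From mathcomp Require Import all_boot all_order all_algebra.
From mathcomp Require Import all_classical all_reals all_analysis.
From mathcomp Require Import measurable_realfun.
Import Order.TTheory GRing.Theory Num.Theory.
Local Open Scope classical_set_scope.
Local Open Scope ring_scope.
Local Open Scope ereal_scope.
Lemma phibar_ge0 (R : realType) d dW (X : measurableType d) (W : measurableType dW)
  (nu : probability W R) (phi : X * X * W -> R) (phi_ge0 : forall z, (0 <= phi z)%R) x y :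
  0 <= phibar nu phi x y.
Proof. by apply: integral_ge0 => w _; rewrite lee_fin. Qed.

Lemma phibar_meas (R : realType) d dW (X : measurableType d) (W : measurableType dW)
  (nu : probability W R) (phi : X * X * W -> R) (mphi : measurable_fun setT phi)
  (phi_ge0 : forall z, (0 <= phi z)%R) :
  measurable_fun setT (fun z : X * X => phibar nu phi z.1 z.2).
Proof.
have := @measurable_fun_fubini_tonelli_F _ _ _ _ R nu (fun z => (phi z)%:E).
rewrite /fubini_F /phibar. 
have -> : (fun z : X * X => \int[nu]_w (phi (z.1, z.2, w))%:E) = (fun x => \int[nu]_y (phi (x, y))%:E).
  by apply/funext => -[].
apply.
  exact/measurable_EFinP.
by move=> z; rewrite lee_fin.
Qed.

Lemma Vop_meas (R : realType) d dW (X : measurableType d) (W : measurableType dW)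
  (Pi : R.-pker X ~> X) (nu : probability W R) (phi : X * X * W -> R) (mphi : measurable_fun setT phi)
  (phi_ge0 : forall z, (0 <= phi z)%R) (f : X -> \bar R) :
  measurable_fun setT f -> (forall x, 0 <= f x) ->
  measurable_fun setT (Vop Pi nu phi f).
Proof.
move=> mf f0; rewrite /Vop.
apply: (measurable_fun_integral_finite_kernel (fun z : X * X => f z.2 * phibar nu phi z.1 z.2) Pi).
  by move=> z; rewrite mule_ge0 //; exact: phibar_ge0.
apply: emeasurable_funM.
  exact: measurableT_comp.
exact: phibar_meas.
Qed.

Lemma Vop_ge0 (R : realType) d dW (X : measurableType d) (W : measurableType dW)
  (Pi : R.-pker X ~> X) (nu : probability W R) (phi : X * X * W -> R)
  (phi_ge0 : forall z, (0 <= phi z)%R) (f : X -> \bar R) :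
  (forall x, 0 <= f x) -> forall x, 0 <= Vop Pi nu phi f x.
Proof.
move=> f0 x; apply: integral_ge0 => y _; rewrite mule_ge0 //; exact: phibar_ge0.
Qed.
Lemma nd_le_lim (R : realType) (a : nat -> \bar R) (l : \bar R) :
  nondecreasing_seq a -> a @ \oo --> l -> forall n, a n <= l.
Proof.
move=> nda al n; rewrite -(cvg_lim _ al) //; apply: lime_ge.
  exact: ereal_nondecreasing_is_cvgn.
by near=> m; apply: nda; near: m; exists n.
Unshelve. all: by end_near. Qed.

Lemma mule_cvg_nd (R : realType) (a : nat -> \bar R) (l c : \bar R) :
  (forall n, 0 <= a n) -> nondecreasing_seq a -> a @ \oo --> l -> 0 <= c ->
  (fun n => a n * c) @ \oo --> l * c.
Proof.
move=> a0 nda al c0.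
have al' := @nd_le_lim R a l nda al.
have [lc|nlc] := boolP (l *? c).
  by apply: cvgeM => //; exact: cvg_cst.
move: nlc; rewrite mule_defE negbK => /orP[/andP[/eqP l0 _]|/andP[/eqP c0' _]].
  have an0 n : a n = 0 by apply/le_anti; rewrite a0 -l0 al'.
  by rewrite l0 mul0e; under eq_fun do rewrite an0 mul0e; exact: cvg_cst.
by rewrite c0' mule0; under eq_fun do rewrite mule0; exact: cvg_cst.
Qed.

Lemma measK (R : realType) d dW (X : measurableType d) (W : measurableType dW)
  (nu : probability W R) (phi : X * X * W -> R) (mphi : measurable_fun setT phi)
  (phi_ge0 : forall z, (0 <= phi z)%R) (f : X -> \bar R) x :
  measurable_fun setT f -> measurable_fun setT (fun y => f y * phibar nu phi x y).
Proof.
move=> mf; apply: emeasurable_funM => //.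
exact: (measurable_fun_pair2 (f := fun z : X * X => phibar nu phi z.1 z.2) x (phibar_meas nu mphi phi_ge0)).
Qed.

Lemma Vop_le (R : realType) d dW (X : measurableType d) (W : measurableType dW)
  (Pi : R.-pker X ~> X) (nu : probability W R) (phi : X * X * W -> R) (mphi : measurable_fun setT phi)
  (phi_ge0 : forall z, (0 <= phi z)%R) (f1 f2 : X -> \bar R) :
  measurable_fun setT f1 -> measurable_fun setT f2 -> (forall x, 0 <= f1 x) ->
  (forall x, f1 x <= f2 x) -> forall x, Vop Pi nu phi f1 x <= Vop Pi nu phi f2 x.
Proof.
move=> mf1 mf2 f10 f12 x; apply: ge0_le_integral => //.
- by move=> y _; rewrite mule_ge0 //; exact: phibar_ge0.
- exact: measK.
- exact: measK.
- by move=> y _; apply: lee_wpmul2r => //; exact: phibar_ge0.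
Qed.

Lemma Vop_cvg (R : realType) d dW (X : measurableType d) (W : measurableType dW)
  (Pi : R.-pker X ~> X) (nu : probability W R) (phi : X * X * W -> R) (mphi : measurable_fun setT phi)
  (phi_ge0 : forall z, (0 <= phi z)%R) (u : nat -> X -> \bar R) (h : X -> \bar R) :
  (forall n, measurable_fun setT (u n)) -> (forall n x, 0 <= u n x) ->
  (forall x, nondecreasing_seq (u ^~ x)) -> (forall x, u ^~ x @ \oo --> h x) ->
  forall x, Vop Pi nu phi (u n) x @[n --> \oo] --> Vop Pi nu phi h x.
Proof.
move=> mu u0 ndu uh x.
have := @cvg_monotone_convergence _ _ R (Pi x) setT measurableT
  (fun n y => u n y * phibar nu phi x y).
move=> /(_ _ _ _) H; rewrite /Vop.
have E : \int[Pi x]_y limn (fun n => u n y * phibar nu phi x y) =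
    \int[Pi x]_y (h y * phibar nu phi x y).
  apply: eq_integral => y _; apply: cvg_lim => //; apply: mule_cvg_nd => //.
  exact: phibar_ge0.
rewrite -E; apply: H.
- by move=> n; exact: measK.
- by move=> n y _; rewrite mule_ge0 //; exact: phibar_ge0.
- move=> y _ m n mn; apply: lee_wpmul2r; first exact: phibar_ge0.
  exact: ndu.
Qed.

Lemma Top_meas (R : realType) d dW (X : measurableType d) (W : measurableType dW)
  (Pi : R.-pker X ~> X) (nu : probability W R) (phi g : X * X * W -> R) (mphi : measurable_fun setT phi)
  (phi_ge0 : forall z, (0 <= phi z)%R)
  (mG : measurable_fun setT (ghat Pi nu phi g)) (G0 : forall x, 0 <= ghat Pi nu phi g x)
  (f : X -> \bar R) :
  measurable_fun setT f -> (forall x, 0 <= f x) ->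
  measurable_fun setT (Top Pi nu phi g f) /\ forall x, 0 <= Top Pi nu phi g f x.
Proof.
move=> mf f0; split.
  by apply: emeasurable_funD => //; exact: Vop_meas.
by move=> x; rewrite /Top adde_ge0 //; exact: Vop_ge0.
Qed.

Lemma iter_meas (R : realType) d dW (X : measurableType d) (W : measurableType dW)
  (Pi : R.-pker X ~> X) (nu : probability W R) (phi g : X * X * W -> R) (mphi : measurable_fun setT phi)
  (phi_ge0 : forall z, (0 <= phi z)%R)
  (mG : measurable_fun setT (ghat Pi nu phi g)) (G0 : forall x, 0 <= ghat Pi nu phi g x)
  (f : X -> \bar R) :
  measurable_fun setT f -> (forall x, 0 <= f x) -> forall n,
  measurable_fun setT (iter n (Top Pi nu phi g) f) /\ forall x, 0 <= iter n (Top Pi nu phi g) f x.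
Proof.
move=> mf f0; elim=> [//|n [IH1 IH2]] /=.
exact: Top_meas.
Qed.

Lemma Top_le (R : realType) d dW (X : measurableType d) (W : measurableType dW)
  (Pi : R.-pker X ~> X) (nu : probability W R) (phi g : X * X * W -> R) (mphi : measurable_fun setT phi)
  (phi_ge0 : forall z, (0 <= phi z)%R) (f1 f2 : X -> \bar R) :
  measurable_fun setT f1 -> measurable_fun setT f2 -> (forall x, 0 <= f1 x) ->
  (forall x, f1 x <= f2 x) -> forall x, Top Pi nu phi g f1 x <= Top Pi nu phi g f2 x.
Proof.
move=> mf1 mf2 f10 f12 x; rewrite /Top leeD2r //; exact: Vop_le.
Qed.

Lemma iter_le (R : realType) d dW (X : measurableType d) (W : measurableType dW)
  (Pi : R.-pker X ~> X) (nu : probability W R) (phi g : X * X * W -> R) (mphi : measurable_fun setT phi)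
  (phi_ge0 : forall z, (0 <= phi z)%R)
  (mG : measurable_fun setT (ghat Pi nu phi g)) (G0 : forall x, 0 <= ghat Pi nu phi g x)
  (f1 f2 : X -> \bar R) :
  measurable_fun setT f1 -> measurable_fun setT f2 -> (forall x, 0 <= f1 x) ->
  (forall x, f1 x <= f2 x) -> forall n x,
  iter n (Top Pi nu phi g) f1 x <= iter n (Top Pi nu phi g) f2 x.
Proof.
move=> mf1 mf2 f10 f12; elim=> [//|n IH] x /=.
have [m1 p1] := iter_meas mphi phi_ge0 mG G0 mf1 f10 n.
have f20 : forall x, 0 <= f2 x by move=> y; exact: le_trans (f10 y) (f12 y).
have [m2 _] := iter_meas mphi phi_ge0 mG G0 mf2 f20 n.
exact: Top_le.
Qed.

Lemma pow_nd (R : realType) (x y : \bar R) (p : R) : (0 <= p)%R -> 0 <= x -> x <= y ->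
  x `^ p <= y `^ p.
Proof.
move=> p0 x0 xy; apply: gt0_ler_poweR => //.
  by rewrite in_itv /= x0 leey.
by rewrite in_itv /= (le_trans x0 xy) leey.
Qed.

Lemma pow_lsc (R : realType) (a : nat -> \bar R) (l : \bar R) (p : R) :
  (0 < p)%R -> (forall n, 0 <= a n) -> nondecreasing_seq a -> a @ \oo --> l ->
  l `^ p <= limn (fun n => a n `^ p).
Proof.
move=> p0 a0 nda al.
set b := fun n => a n `^ p.
have ndb : nondecreasing_seq b.
  by move=> m n mn; apply: pow_nd => //; [exact: ltW | exact: nda].
have bL := @nd_le_lim R b (limn b) ndb (ereal_nondecreasing_is_cvgn ndb).
rewrite leNgt; apply/negP => Llt.
have L0 : 0 <= limn b by apply: le_trans (bL 0%N); exact: poweR_ge0.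
have Lfin : limn b \is a fin_num.
  by rewrite ge0_fin_numE // (lt_le_trans Llt) // leey.
set r := fine (limn b).
have r0 : (0 <= r)%R by rewrite /r fine_ge0.
set t := (r `^ p^-1)%R.
have t0 : (0 <= t)%R by exact: powR_ge0.
have tp : (t `^ p = r)%R.
  by rewrite /t -powRrM mulVf ?gt_eqF // powRr1.
have tl : t%:E < l.
  rewrite ltNge; apply/negP => lt.
  have := @pow_nd R _ _ p (ltW p0) (le_trans (a0 0%N) (nd_le_lim nda al 0%N)) lt.
  by rewrite poweR_EFin tp /r fineK // leNgt Llt.
have lsup : l = ereal_sup (range a).
  exact: (cvg_unique _ al (ereal_nondecreasing_cvgn nda)).
rewrite lsup in tl.
have [_ [n _ <-] tan] := ereal_sup_gt tl.
have := bL n; rewrite leNgt => /negP; apply.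
rewrite /b; move: tan (a0 n); case: (a n) => [s | |] //.
  move=> ts s0; rewrite poweR_EFin -(fineK Lfin) lte_fin -/r -tp.
  by apply: gt0_ltr_powR => //; rewrite ?nnegrE // -lee_fin ltW.
move=> _ _; rewrite poweRyr ?gt_eqF // -(fineK Lfin); exact: ltry.
Qed.

Lemma powD_le (R : realType) (A B : \bar R) (p : R) : (0 < p)%R -> 0 <= A -> 0 <= B ->
  (A + B) `^ p <= ((2:R) `^ p)%:E * (A `^ p + B `^ p).
Proof.
move=> p0 A0 B0.
wlog AB : A B A0 B0 / A <= B.
  move=> H; have [AB|BA] := leP A B; first exact: H.
  by rewrite addeC [X in _ * X]addeC; apply: H => //; exact: ltW.
have h1 : (A + B) `^ p <= (2%:E * B) `^ p.
  apply: pow_nd => //; [exact: ltW | exact: adde_ge0 |].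
  by rewrite (_ : 2%:E * B = B + B) ?leeD2r // (mule_natl B 2) mule2n.
apply: le_trans h1 _.
rewrite poweRM // poweR_EFin; apply: lee_wpmul2l; first by rewrite lee_fin powR_ge0.
by rewrite leeDr // poweR_ge0.
Qed.

Lemma tri_pow (R : realType) (w h : \bar R) (p : R) : (0 < p)%R -> 0 <= w -> 0 <= h ->
  `|w| `^ p <= ((2:R) `^ p)%:E * (`|h| `^ p + `|w - h| `^ p).
Proof.
move=> p0 w0 h0.
have tri : `|w| <= `|h| + `|w - h|.
  move: h0; case: h => [r | |] // r0.
    rewrite -[X in `|X|](@subeK _ w r%:E) //.
    by apply: le_trans (lee_abs_add _ _) _; rewrite addeC.
  rewrite (_ : `|+oo| = +oo) // addye ?leey //; by rewrite gt_eqF // (lt_le_trans ltNy0 (abse_ge0 _)).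
apply: (@le_trans _ _ ((`|h| + `|w - h|) `^ p)).
  by apply: pow_nd => //; exact: ltW.
exact: powD_le.
Qed.

Lemma near_le1 (R : realType) (a : nat -> \bar R) : (forall n, 0 <= a n) ->
  a @ \oo --> 0 -> exists N, forall n, (N <= n)%N -> a n <= 1.
Proof.
move=> a0 /fine_cvgP[Hf Hc].
have H2 : \forall t \near \oo, ((fine \o a) t < 1)%R.
  by apply: cvgr_lt Hc _ _; exact: ltr01.
have := filterI Hf H2.
case=> N _ HN; exists N => n Nn.
have [fn lt1] := HN n Nn.
by rewrite -(fineK fn) lee_fin ltW.
Qed.

Lemma converse (R : realType) d dW (X : measurableType d) (W : measurableType dW)
  (Pi : R.-pker X ~> X) (nu : probability W R) (phi g : X * X * W -> R) (mphi : measurable_fun setT phi)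
  (phi_ge0 : forall z, (0 <= phi z)%R)
  (mG : measurable_fun setT (ghat Pi nu phi g)) (G0 : forall x, 0 <= ghat Pi nu phi g x)
  (pi : {measure set X -> \bar R}) (p : R) (p1 : (1 <= p)%R) (g0 h : X -> \bar R) :
  inHp pi p g0 -> inHp pi p h ->
  ('N[pi]_(p%:E)[(fun x => iter n (Top Pi nu phi g) g0 x - h x)] @[n --> \oo] --> 0) ->
  exists hs, inHp pi p hs /\ forall x, Top Pi nu phi g hs x = hs x.
Proof.
move=> [[mg0 g0fin] g00] [[mh hfin] h0] Hcvg.
have p0 : (0 < p)%R by apply: lt_le_trans p1.
set T := Top Pi nu phi g.
set u := fun n => iter n T (cst 0).
have m0 : measurable_fun setT (@cst X (\bar R) 0) by exact: measurable_cst.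
have c0 : forall x : X, 0 <= @cst X (\bar R) 0 x by [].
have mu n : measurable_fun setT (u n) := (iter_meas mphi phi_ge0 mG G0 m0 c0 n).1.
have u0 n : forall x, 0 <= u n x := (iter_meas mphi phi_ge0 mG G0 m0 c0 n).2.
have ndu : forall x, nondecreasing_seq (u ^~ x).
  move=> x; apply/nondecreasing_seqP => n; elim: n x => [|n IH] x.
    exact: (u0 1%N).
  exact: (Top_le Pi nu g mphi phi_ge0 (mu n) (mu n.+1) (u0 n) IH x).
set hs := fun x => limn (u ^~ x).
have uhs : forall x, u ^~ x @ \oo --> hs x.
  by move=> x; exact: ereal_nondecreasing_is_cvgn (ndu x).
have mhs : measurable_fun setT hs.
  by apply: (@emeasurable_fun_cvg _ _ _ _ u) => // x _; exact: uhs.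
have hs0 : forall x, 0 <= hs x.
  by move=> x; apply: le_trans (u0 0%N x) (nd_le_lim (ndu x) (uhs x) 0%N).
exists hs; split; last first.
  move=> x.
  have H1 := Vop_cvg Pi nu mphi phi_ge0 u hs mu u0 ndu uhs x.
  have H2 : (fun n => u n.+1 x) @ \oo --> T hs x.
    have := cvgeD (ge0_adde_def _ _) H1 (cvg_cst (ghat Pi nu phi g x)).
    apply; rewrite inE.
      exact: Vop_ge0.
    exact: G0.
  have H3 : (fun n => u n.+1 x) @ \oo --> hs x.
    by rewrite (cvg_shiftS (u ^~ x)); exact: uhs.
  exact: (cvg_unique _ H2 H3).
split; last by [].
split => //.
have mpow : forall f : X -> \bar R, measurable_fun setT f ->
    measurable_fun setT (fun x => `|f x| `^ p).
  move=> f mf.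
  exact: (measurableT_comp (measurable_poweR p) (measurableT_comp (@abse_measurable R setT) mf)).
set w := fun n => iter n T g0.
have mw n : measurable_fun setT (w n) := (iter_meas mphi phi_ge0 mG G0 mg0 g00 n).1.
have w0 n : forall x, 0 <= w n x := (iter_meas mphi phi_ge0 mG G0 mg0 g00 n).2.
have uw n x : u n x <= w n x := iter_le mphi phi_ge0 mG G0 m0 mg0 c0 g00 n x.
have a0 : forall n, 0 <= 'N[pi]_(p%:E)[(fun x => iter n (Top Pi nu phi g) g0 x - h x)].
  by move=> n; exact: Lnorm_ge0.
have [N HN] := near_le1 a0 Hcvg.
set c := ((2:R) `^ p)%:E.
have c0' : 0 <= c by rewrite lee_fin powR_ge0.
set Ih := \int[pi]_x `|h x| `^ p.
have Ih0 : 0 <= Ih by apply: integral_ge0 => x _; exact: poweR_ge0.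
have Ihfin : Ih \is a fin_num.
  rewrite ge0_fin_numE // /Ih -poweR_Lnorm ?gt_eqF //; exact: poweR_lty.
set C := c * (Ih + 1).
have Cfin : C \is a fin_num by rewrite fin_numM // fin_numD Ihfin.
have bound n : (N <= n)%N -> \int[pi]_x `|u n x| `^ p <= C.
  move=> Nn.
  have In1 : \int[pi]_x `|w n x - h x| `^ p <= 1.
    rewrite -poweR_Lnorm ?gt_eqF // -(poweR1r p).
    apply: pow_nd => //; [exact: ltW | exact: Lnorm_ge0 | exact: HN].
  have mwh : measurable_fun setT (fun x => w n x - h x) by exact: emeasurable_funB.
  apply: (@le_trans _ _ (\int[pi]_x (c * (`|h x| `^ p + `|w n x - h x| `^ p)))).
    apply: ge0_le_integral => //.
    - by move=> x _; exact: poweR_ge0.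
    - exact: mpow.
    - apply: emeasurable_funM => //; apply: emeasurable_funD; exact: mpow.
    move=> x _; apply: (@le_trans _ _ (`|w n x| `^ p)).
      apply: pow_nd => //; first exact: ltW.
      by rewrite !gee0_abs //; exact: uw.
    exact: tri_pow.
  rewrite ge0_integralZl //; last 2 first.
    - apply: emeasurable_funD; exact: mpow.
    - by move=> x _; rewrite adde_ge0 // poweR_ge0.
  rewrite ge0_integralD //; last 4 first.
    - by move=> x _; exact: poweR_ge0.
    - exact: mpow.
    - by move=> x _; exact: poweR_ge0.
    - exact: mpow.
  by apply: lee_wpmul2l => //; rewrite leeD2l.
have boundall n : \int[pi]_x `|u n x| `^ p <= C.
  apply: le_trans (bound (n + N)%N (leq_addl _ _)).
  apply: ge0_le_integral => //.
  - by move=> x _; exact: poweR_ge0.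
  - exact: mpow.
  - exact: mpow.
  move=> x _; apply: pow_nd => //; first exact: ltW.
  by rewrite !gee0_abs //; apply: ndu; exact: leq_addr.
set g' := fun n x => `|u n x| `^ p.
have mg' n : measurable_fun setT (g' n) by exact: mpow.
have g'0 n x : setT x -> 0 <= g' n x by move=> _; exact: poweR_ge0.
have ndg' x : setT x -> nondecreasing_seq (g' ^~ x).
  move=> _ m n mn; apply: pow_nd => //; first exact: ltW.
  by rewrite !gee0_abs //; exact: ndu.
have Hmct := @cvg_monotone_convergence _ _ _ pi _ measurableT _ mg' g'0 ndg'.
have Llim : \int[pi]_x limn (g' ^~ x) <= C.
  rewrite -(cvg_lim _ Hmct) //; apply: lime_le.
    by apply/cvg_ex; eexists; exact: Hmct.
  exact: nearW.
have mL : measurable_fun setT (fun x => limn (g' ^~ x)).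
  apply: (@emeasurable_fun_cvg _ _ _ _ g') => // x _.
  exact: ereal_nondecreasing_is_cvgn (ndg' x Logic.I).
have Ihs : \int[pi]_x `|hs x| `^ p <= C.
  apply: le_trans Llim; apply: ge0_le_integral => //.
  - by move=> x _; exact: poweR_ge0.
  - exact: mpow.
  move=> x _; rewrite gee0_abs //.
  have -> : g' ^~ x = (fun n => u n x `^ p).
    by apply/funext => n; rewrite /g' gee0_abs.
  by apply: pow_lsc.
apply: (@lty_poweRy _ _ p); first by rewrite gt_eqF.
rewrite poweR_Lnorm ?gt_eqF //.
apply: le_lt_trans Ihs _; by rewrite ltey_eq Cfin.
Qed.

Lemma abs_cont (R : realType) d (X : measurableType d) (Pi : R.-pker X ~> X)
  (pi : {measure set X -> \bar R})
  (stat : forall B : set X, measurable B -> \int[pi]_x Pi x B = pi B)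
  (N : set X) : measurable N -> pi N = 0 -> {ae pi, forall x, Pi x N = 0}.
Proof.
move=> mN piN.
have mk : measurable_fun setT (fun x => Pi x N) by exact: measurable_kernel.
have : \int[pi]_x `|Pi x N| = 0.
  rewrite -piN -stat //; apply: eq_integral => x _; rewrite gee0_abs //.
move/(ae_eq_integral_abs pi measurableT mk).
rewrite /ae_eq => H; apply: filterS H => x; exact.
Qed.

Lemma Top_ae (R : realType) d dW (X : measurableType d) (W : measurableType dW)
  (Pi : R.-pker X ~> X) (nu : probability W R) (phi g : X * X * W -> R) (mphi : measurable_fun setT phi)
  (phi_ge0 : forall z, (0 <= phi z)%R)
  (pi : {measure set X -> \bar R})
  (stat : forall B : set X, measurable B -> \int[pi]_x Pi x B = pi B)
  (f1 f2 : X -> \bar R) :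
  measurable_fun setT f1 -> measurable_fun setT f2 ->
  {ae pi, forall x, f1 x = f2 x} ->
  {ae pi, forall x, Top Pi nu phi g f1 x = Top Pi nu phi g f2 x}.
Proof.
move=> mf1 mf2 [A [mA piA sA]].
have H := abs_cont Pi pi stat A mA piA. apply: filterS H => x PiA.
rewrite /Top /Vop; congr (_ + _).
apply: ae_eq_integral => //; try exact: measK.
exists A; split => // y /= Hy; apply: sA => /= e; apply: Hy => _.
by rewrite e.
Qed.

Lemma forward (R : realType) d dW (X : measurableType d) (W : measurableType dW)
  (Pi : R.-pker X ~> X) (nu : probability W R) (phi g : X * X * W -> R) (mphi : measurable_fun setT phi)
  (phi_ge0 : forall z, (0 <= phi z)%R)
  (mG : measurable_fun setT (ghat Pi nu phi g)) (G0 : forall x, 0 <= ghat Pi nu phi g x)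
  (pi : {measure set X -> \bar R})
  (stat : forall B : set X, measurable B -> \int[pi]_x Pi x B = pi B)
  (p : R) (p1 : (1 <= p)%R) (h : X -> \bar R) :
  inHp pi p h -> {ae pi, forall x, Top Pi nu phi g h x = h x} ->
  (exists g0 h, inHp pi p g0 /\ inHp pi p h /\
     ('N[pi]_(p%:E)[(fun x => iter n (Top Pi nu phi g) g0 x - h x)]
        @[n --> \oo] --> 0)).
Proof.
move=> hHp Hfix; have [[mh hfin] h0] := hHp.
have p0 : (0 < p)%R by apply: lt_le_trans p1.
exists h, h; split => //; split => //.
have mpow : forall f : X -> \bar R, measurable_fun setT f ->
    measurable_fun setT (fun x => `|f x| `^ p).
  move=> f mf.
  exact: (measurableT_comp (measurable_poweR p) (measurableT_comp (@abse_measurable R setT) mf)).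
have mi n := (iter_meas mphi phi_ge0 mG G0 mh h0 n).1.
have iter_ae n : {ae pi, forall x, iter n (Top Pi nu phi g) h x = h x}.
  elim: n => [|n IH]; first exact: aeW.
  have H1 := Top_ae Pi nu g mphi phi_ge0 pi stat (mi n) mh IH.
  apply: filterS2 H1 Hfix => x e1 e2 /=.
  by rewrite e1 e2.
have hfae : {ae pi, forall x, h x \is a fin_num}.
  have hint : pi.-integrable setT (fun x => `|h x| `^ p).
    apply/integrableP; split; first exact: mpow.
    rewrite (eq_integral (fun x => `|h x| `^ p)); last first.
      by move=> x _; rewrite gee0_abs // poweR_ge0.
    rewrite -poweR_Lnorm ?gt_eqF //; exact: poweR_lty.
  have := integrable_ae measurableT hint.
  apply: filterS => x /(_ Logic.I); move: (h0 x); case: (h x) => //.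
  by move=> _; rewrite (_ : `|+oo| = +oo) // poweRyr ?gt_eqF.
have zero n : 'N[pi]_(p%:E)[(fun x => iter n (Top Pi nu phi g) h x - h x)] = 0.
  have E : \int[pi]_x `|iter n (Top Pi nu phi g) h x - h x| `^ p = 0.
    rewrite (ae_eq_integral (cst 0)) ?integral0 //.
      exact: (mpow (fun x => iter n (Top Pi nu phi g) h x - h x) (emeasurable_funB (mi n) mh)).
    rewrite /ae_eq; apply: filterS2 (iter_ae n) hfae => x e f _.
    by rewrite e subee // abse0 poweR0r ?gt_eqF.
  have := poweR_Lnorm pi (fun x => iter n (Top Pi nu phi g) h x - h x) (r := p).
  rewrite E ?gt_eqF // => /(_ isT) /poweR_eq0_eq0; apply; exact: Lnorm_ge0.
rewrite (_ : (fun n => _) = fun=> 0); first exact: cvg_cst.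
by apply/funext => n; exact: zero.
Qed.

Unset Implicit Arguments.
Theorem mainTheorem12
  (R : realType)
  (* state space: separable completely metrizable, with its Borel sets *)
  (X : completePseudoMetricType R) (hX : hausdorff_space X)
  (sepX : separable_space X)
  (* shock space *)
  (dW : measure_display) (W : measurableType dW) (nu : probability W R)
  (* transition kernel and stationary law *)
  (Pi : R.-pker (Borel X) ~> (Borel X)) (pi : probability (Borel X) R)
  (stat : forall B : set (Borel X), measurable B ->
            \int[pi]_x Pi x B = pi B)
  (phi g : Borel X * Borel X * W -> R)
  (mphi : measurable_fun setT phi) (mg : measurable_fun setT g)
  (phi_ge0 : forall z, (0 <= phi z)%R) (g_ge0 : forall z, (0 <= g z)%R)
  (p : R) (p_ge1 : (1 <= p)%R)
  (* A1 *)
  (A1phi : forall z, (0 < phi z)%R)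
  (A1g : 0 < \int[pi]_x \int[Pi x]_y \int[nu]_w
                 (\1_[set z | (0 < g z)%R] (x, y, w))%:E)
  (* A2 *)
  (A2 : forall B : set (Borel X), measurable B -> 0 < pi B ->
          forall x, exists n : nat, 0 < kpow Pi n.+1 x B)
  (* A3 *)
  (A3g : inHp pi p (ghat Pi nu phi g))
  (A3V : maps_Lp_into_itself pi p Pi (phibar nu phi))
  (A3c : exists i : nat, (0 < i)%N /\ compact_op pi p (iter i (Vop Pi nu phi))) :
  (exists h, inHp pi p h /\ {ae pi, forall x, Top Pi nu phi g h x = h x})
  <->
  (exists g0 h, inHp pi p g0 /\ inHp pi p h /\
     ('N[pi]_(p%:E)[(fun x => iter n (Top Pi nu phi g) g0 x - h x)]
        @[n --> \oo] --> 0)).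
Proof.
have [[mG _] G0] := A3g.
split.
  move=> [h [hHp hfix]].
  exact: (forward mphi phi_ge0 mG G0 stat p_ge1 hHp hfix).
move=> [g0 [h [Hg0 [Hh Hc]]]].
have [hs [Hhs hfix]] := converse mphi phi_ge0 mG G0 p_ge1 Hg0 Hh Hc.
by exists hs; split => //; exact: aeW.
Qed.
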